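(* Let $n \ge 1$ be an integer and let $s(n,3)$ be the maximum cardinality of a Sidon-type set of strength 3 in $\mathbb{Z}_n$. Then: (i) $s(n,3) \ge \lfloor n/4 \rfloor$ if $n$ is even; (ii) $s(n,3) \ge \lfloor (n+1)/6 \rfloor$ if $n$ is odd and has no divisors congruent to $5 \bmod 6$; (iii) $s(n,3) \ge \frac{(p+1)n}{6p}$ if $n$ is odd and $p$ is its smallest divisor which is congruent to $5 \bmod 6$.
   Context: A subset $S \subseteq \mathbb{Z}_n$ (viewed as a set of integers in $[1,n]$) is a Sidon-type set of strength $t$ if no non-trivial sum $\varepsilon_1 x_1 + \cdots + \varepsilon_t x_t$, with $\varepsilon_i \in \{0,\pm1\}$ and $x_1,\dots,x_t \in S$ not necessarily distinct, is congruent to $0 \bmod n$. Such a sum is called non-trivial if at least one $\varepsilon_i$ is nonzero and no element of $S$ appears in it both with coefficient $+1$ and with coefficient $-1$. $s(n,t)$ denotes the maximum cardinality of a Sidon-type set of strength $t$ in $\mathbb{Z}_n$. *)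

(* Defs.v *)
From HB Require Import structures.
From mathcomp Require Import all_boot all_order all_algebra.
Set Implicit Arguments. Unset Strict Implicit. Unset Printing Implicit Defensive.
Import Order.TTheory GRing.Theory Num.Theory.

(* Coefficient encoding: k : 'I_3 stands for eps k = k - 1 in {-1, 0, 1}. *)
Definition eps (k : 'I_3) : int := (k%:Z - 1)%R.

(* Residues of Z_n are represented by 'I_n (values 0..n-1); a residue x
   corresponds to the integer representative in [1,n] congruent to x mod n,
   so congruence mod n is unaffected. *)

Definition nontrivial_sum (n t : nat) (x : {ffun 'I_t -> 'I_n})
    (e : {ffun 'I_t -> 'I_3}) : bool :=
  [exists i, eps (e i) != 0%R] &&
  [forall i, forall j, (x i == x j) ==> ~~ ((eps (e i) == 1%R) && (eps (e j) == (-1)%R))].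

Definition sidon_type (n t : nat) (S : {set 'I_n}) : bool :=
  [forall x : {ffun 'I_t -> 'I_n}, forall e : {ffun 'I_t -> 'I_3},
     ([forall i, x i \in S] && nontrivial_sum x e) ==>
     ~~ (n%:Z %| (\sum_(i < t) (eps (e i) * (x i)%:Z))%R)%Z].

Definition s (n t : nat) : nat :=
  \max_(S : {set 'I_n} | sidon_type t S) #|S|.

(* Main.v *)
Require Import Defs.
From HB Require Import structures.
From mathcomp Require Import all_boot all_order all_algebra.
From mathcomp Require Import zify ring.
Import Order.TTheory GRing.Theory Num.Theory.
Local Open Scope ring_scope.
Definition E (e : int) := e = -1 \/ e = 0 \/ e = 1.

Lemma dcs1 (n s : int) : 0 < n -> (n %| s)%Z -> - n < s -> s < n -> s = 0.
Proof.
move=> n0 /dvdzP [q ->] h1 h2.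
have : -1 < q < 1.
  apply/andP; split.
  - rewrite ltNge; apply/negP => h.
    have : q * n <= -1 * n by rewrite ler_pM2r.
    lia.
  - rewrite ltNge; apply/negP => h.
    have : 1 * n <= q * n by rewrite ler_pM2r.
    lia.
clear h1 h2; case: q => [[|q]|q] //= _; lia.
Qed.

Lemma dcs3 (n s : int) : 0 < n -> (n %| s)%Z -> - (2 * n) < s -> s < 2 * n ->
  s = 0 \/ s = n \/ s = - n.
Proof.
move=> n0 /dvdzP [q ->] h1 h2.
have : -2 < q < 2.
  apply/andP; split.
  - rewrite ltNge; apply/negP => h.
    have : q * n <= -2 * n by rewrite ler_pM2r.
    lia.
  - rewrite ltNge; apply/negP => h.
    have : 2 * n <= q * n by rewrite ler_pM2r.
    lia.
clear h1 h2; case: q => [[|[|q]]|[|q]] //= _; rewrite ?NegzE; lia.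
Qed.

Lemma core_lift (n p a b c ra rb rc e0 e1 e2 : int) :
  0 < n -> 0 <= a < n -> 0 <= b < n -> 0 <= c < n ->
  p < 3 * ra -> 2 * ra < p -> p < 3 * rb -> 2 * rb < p -> p < 3 * rc -> 2 * rc < p ->
  E e0 -> E e1 -> E e2 -> ~ (e0 = 0 /\ e1 = 0 /\ e2 = 0) ->
   (a = b -> ~ (e0 = 1 /\ e1 = -1)) -> (b = a -> ~ (e1 = 1 /\ e0 = -1)) ->
   (a = c -> ~ (e0 = 1 /\ e2 = -1)) -> (c = a -> ~ (e2 = 1 /\ e0 = -1)) ->
   (b = c -> ~ (e1 = 1 /\ e2 = -1)) -> (c = b -> ~ (e2 = 1 /\ e1 = -1)) ->
   (p %| e0 * ra + e1 * rb + e2 * rc)%Z ->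
   (n %| e0 * a + e1 * b + e2 * c)%Z -> False.
Proof.
move=> n0 ha hb hc pa pa' pb pb' pc pc'.
have p0 : 0 < p by lia.
move=> [|[|]] -> [|[|]] -> [|[|]] -> nz nab nba nac nca nbc ncb hp hn;
 (have [h|[h|h]] := dcs3 _ _ p0 hp ltac:(lia) ltac:(lia)); try lia;
 have := dcs1 _ _ n0 hn ltac:(lia) ltac:(lia); lia.
Qed.

Lemma core_even (n m a b c ha hb hc e0 e1 e2 : int) :
  n = 2 * m -> 0 < n -> a = 2 * ha + 1 -> b = 2 * hb + 1 -> c = 2 * hc + 1 ->
  0 <= a -> 2 * a < n -> 0 <= b -> 2 * b < n -> 0 <= c -> 2 * c < n ->
  E e0 -> E e1 -> E e2 -> ~ (e0 = 0 /\ e1 = 0 /\ e2 = 0) ->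
   (a = b -> ~ (e0 = 1 /\ e1 = -1)) -> (b = a -> ~ (e1 = 1 /\ e0 = -1)) ->
   (a = c -> ~ (e0 = 1 /\ e2 = -1)) -> (c = a -> ~ (e2 = 1 /\ e0 = -1)) ->
   (b = c -> ~ (e1 = 1 /\ e2 = -1)) -> (c = b -> ~ (e2 = 1 /\ e1 = -1)) ->
   (n %| e0 * a + e1 * b + e2 * c)%Z -> False.
Proof.
move=> nm n0 ea eb ec ha1 ha2 hb1 hb2 hc1 hc2 E0 E1 E2 nz nab nba nac nca nbc ncb hn.
have [t ht] : exists t, e0 * a + e1 * b + e2 * c = t * 2.
  by apply/dvdzP; apply: dvdz_trans hn; rewrite nm; apply: dvdz_mulr; apply: dvdzz.
move: E0 E1 E2 nz nab nba nac nca nbc ncb hn ht.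
move=> [|[|]] -> [|[|]] -> [|[|]] -> nz nab nba nac nca nbc ncb hn ht; try lia;
 have := dcs1 _ _ n0 hn ltac:(lia) ltac:(lia); lia.
Qed.

Lemma epsE (k : 'I_3) : E (eps k).
Proof. move: (ltn_ord k); rewrite /E /eps; case: (k : nat) => [|[|[|]]] //= _; lia. Qed.

Lemma sidon_gen n (S : {set 'I_n}) :
 (forall (a b c : 'I_n) (e0 e1 e2 : int), a \in S -> b \in S -> c \in S ->
   E e0 -> E e1 -> E e2 -> ~ (e0 = 0 /\ e1 = 0 /\ e2 = 0) ->
   (a%:Z = b%:Z -> ~ (e0 = 1 /\ e1 = -1)) -> (b%:Z = a%:Z -> ~ (e1 = 1 /\ e0 = -1)) ->
   (a%:Z = c%:Z -> ~ (e0 = 1 /\ e2 = -1)) -> (c%:Z = a%:Z -> ~ (e2 = 1 /\ e0 = -1)) ->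
   (b%:Z = c%:Z -> ~ (e1 = 1 /\ e2 = -1)) -> (c%:Z = b%:Z -> ~ (e2 = 1 /\ e1 = -1)) ->
   (n%:Z %| e0 * a%:Z + e1 * b%:Z + e2 * c%:Z)%Z -> False) ->
 sidon_type 3 S.
Proof.
move=> H; apply/forallP => x; apply/forallP => e; apply/implyP.
move=> /andP [/forallP HS /andP [/existsP [i Hi] /forallP Hnt]].
apply/negP => Hd.
rewrite !big_ord_recl big_ord0 addr0 addrA in Hd.
set i0 : 'I_3 := ord0 in Hd; set i1 : 'I_3 := lift ord0 ord0 in Hd;
set i2 : 'I_3 := lift ord0 (lift ord0 ord0) in Hd.
have Hall : forall j : 'I_3, j = i0 \/ j = i1 \/ j = i2.
  by case=> [[|[|[|]]] ] // ?; [left|right;left|right;right]; apply/val_inj.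
have nt : forall j k, (x j)%:Z = (x k)%:Z -> ~ (eps (e j) = 1 /\ eps (e k) = -1).
  move=> j k hjk [h1 h2]; move/forallP: (Hnt j) => /(_ k).
  have -> : x j == x k by apply/eqP/val_inj; case: hjk.
  by rewrite h1 h2 eqxx.
apply: (H (x i0) (x i1) (x i2) _ _ _ (HS _) (HS _) (HS _) (epsE _) (epsE _) (epsE _) _
  (nt _ _) (nt _ _) (nt _ _) (nt _ _) (nt _ _) (nt _ _) Hd).
move=> [h0 [h1 h2]]; move: Hi; case: (Hall i) => [->|[->|->]]; by rewrite ?h0 ?h1 ?h2 eqxx.
Qed.

Lemma sidon_lift n p (S : {set 'I_n}) : (0 < n)%N -> (p %| n)%N ->
  (forall x : 'I_n, x \in S -> (p < 3 * (x %% p))%N /\ (2 * (x %% p) < p)%N) ->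
  sidon_type 3 S.
Proof.
move=> n0 pn HS; apply: sidon_gen => a b c e0 e1 e2 aS bS cS E0 E1 E2 nz nab nba nac nca nbc ncb hn.
have [ha1 ha2] := HS _ aS; have [hb1 hb2] := HS _ bS; have [hc1 hc2] := HS _ cS.
have dec : forall x : nat, x%:Z = (x %/ p)%:Z * p%:Z + (x %% p)%:Z.
  by move=> x; rewrite -PoszM -PoszD -divn_eq.
apply: (@core_lift n%:Z p%:Z a b c (a %% p)%:Z (b %% p)%:Z (c %% p)%:Z e0 e1 e2
  _ _ _ _ _ _ _ _ _ _ E0 E1 E2 nz nab nba nac nca nbc ncb _ hn).
all: clear nab nba nac nca nbc ncb nz HS.
1-10: clear hn dec.
- by lia.
- by apply/andP; split; [lia| have := ltn_ord a; lia].
- by apply/andP; split; [lia| have := ltn_ord b; lia].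
- by apply/andP; split; [lia| have := ltn_ord c; lia].
1-6: by lia.
have hpn : (p%:Z %| n%:Z)%Z by rewrite dvdzE.
have -> : e0 * (a %% p)%:Z + e1 * (b %% p)%:Z + e2 * (c %% p)%:Z =
   (e0 * a%:Z + e1 * b%:Z + e2 * c%:Z) - (e0 * (a %/ p)%:Z + e1 * (b %/ p)%:Z + e2 * (c %/ p)%:Z) * p%:Z.
  by rewrite (dec a) (dec b) (dec c); ring.
by apply: rpredB; [apply: dvdz_trans hpn hn | apply: dvdz_mull; apply: dvdzz].
Qed.

Lemma oddE : forall x : nat, odd x -> x%:Z = 2 * (x./2)%:Z + 1.
move=> x ox. have := odd_double_half x. rewrite ox -muln2 /= => h. rewrite -h. lia.
Qed.
Lemma evE (n : nat) : ~~ odd n -> n%:Z = 2 * (n./2)%:Z.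
move=> ox. have := odd_double_half n. rewrite (negbTE ox) -muln2 /= => h. rewrite -{1}h. lia.
Qed.

Lemma sidon_even n (S : {set 'I_n}) : (0 < n)%N -> ~~ odd n ->
  (forall x : 'I_n, x \in S -> odd x /\ (2 * x < n)%N) ->
  sidon_type 3 S.
Proof.
move=> n0 ev HS; apply: sidon_gen => a b c e0 e1 e2 aS bS cS E0 E1 E2 nz nab nba nac nca nbc ncb hn.
have [ha1 ha2] := HS _ aS; have [hb1 hb2] := HS _ bS; have [hc1 hc2] := HS _ cS.
apply: (@core_even n%:Z (n./2)%:Z a b c (a./2)%:Z (b./2)%:Z (c./2)%:Z e0 e1 e2
  _ _ _ _ _ _ _ _ _ _ _ E0 E1 E2 nz nab nba nac nca nbc ncb hn).
all: clear hn nab nba nac nca nbc ncb nz HS.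
- exact: evE.
- by lia.
- exact: oddE ha1.
- exact: oddE hb1.
- exact: oddE hc1.
all: lia.
Qed.

Local Close Scope ring_scope.

Lemma card_count n (P : pred nat) : #|[set x : 'I_n | P x]| = count P (iota 0 n).
Proof.
rewrite cardsE cardE /enum_mem -enumT size_filter -val_enum_ord count_map.
by apply: eq_count => x.
Qed.

Lemma count_inj n k (P : pred nat) (f : nat -> nat) :
  (forall i, i < k -> f i < n /\ P (f i)) ->
  (forall i j, i < k -> j < k -> f i = f j -> i = j) ->
  k <= count P (iota 0 n).
Proof.
move=> Hf Hinj; rewrite -size_filter -{1}(size_iota 0 k) -(size_map f).
apply: uniq_leq_size.
  rewrite map_inj_in_uniq ?iota_uniq // => i j; rewrite !mem_iota !add0n; exact: Hinj.
move=> y /mapP [i]; rewrite mem_iota add0n => /Hf [h1 h2] ->.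
by rewrite mem_filter h2 mem_iota.
Qed.

Lemma count_periodic p m (P : pred nat) : (forall x, P (p + x) = P x) ->
  count P (iota 0 (m * p)) = m * count P (iota 0 p).
Proof.
move=> HP; have HPm : forall j x, P (j * p + x) = P x.
  by elim=> [|j IH] x //; rewrite mulSn -addnA HP IH.
elim: m => [|m IH] //; rewrite mulSn addnC iotaD count_cat IH add0n.
have -> : iota (m * p) p = map (addn (m * p)) (iota 0 p) by rewrite -iotaDl addn0.
rewrite count_map mulSn addnC; congr (_ + _); apply: eq_count => x /=; exact: HPm.
Qed.

Lemma s_ge n (S : {set 'I_n}) : sidon_type 3 S -> #|S| <= s n 3.
Proof. move=> h; rewrite /s; exact: (@leq_bigmax_cond _ (fun S : {set 'I_n} => sidon_type 3 S) (fun S : {set 'I_n} => #|S|) S h). Qed.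

Theorem theorem4p1 (n : nat) (hn : 1 <= n) :
  [/\ (~~ odd n -> n %/ 4 <= s n 3),
      (odd n -> (forall d, d %| n -> d %% 6 != 5) -> (n + 1) %/ 6 <= s n 3)
    & (forall p : nat, odd n -> p %| n -> p %% 6 = 5 ->
         (forall d, d %| n -> d %% 6 = 5 -> p <= d) ->
         (((p + 1) * n)%:R / (6 * p)%:R <= (s n 3)%:R :> rat)%R)].
Proof.
split.
- move=> ev.
  pose S := [set x : 'I_n | odd x && (2 * x < n)].
  have hS : sidon_type 3 S by apply: sidon_even => // x; rewrite inE => /andP [].
  apply: (@leq_trans #|S|); last exact: s_ge hS.
  rewrite /S (card_count n (fun x => odd x && (2 * x < n))).
  apply: (@count_inj _ _ _ (fun i => 2 * i + 1)) => [i hi|i j _ _]; last by lia.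
  rewrite /= addn1 /= oddM /=; split; lia.
- move=> od _.
  have n2 : n = 2 * n./2 + 1 by rewrite -{1}(odd_double_half n) od; lia.
  pose S := [set x : 'I_n | (n < 3 * (x %% n)) && (2 * (x %% n) < n)].
  have hS : sidon_type 3 S by apply: (@sidon_lift n n) => // x; rewrite inE => /andP [].
  apply: (@leq_trans #|S|); last exact: s_ge hS.
  rewrite /S (card_count n (fun x => (n < 3 * (x %% n)) && (2 * (x %% n) < n))).
  apply: (@count_inj _ _ _ (fun i => n %/ 3 + 1 + i)) => [i hi|i j _ _]; last by lia.
  have hi' : n %/ 3 + 1 + i < n by lia.
  rewrite /= modn_small //; split => //; apply/andP; split; lia.
- move=> p od pn p5 _.
  have p0 : 0 < p by lia.
  pose S := [set x : 'I_n | (p < 3 * (x %% p)) && (2 * (x %% p) < p)].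
  have hS : sidon_type 3 S by apply: (@sidon_lift n p) => // x; rewrite inE => /andP [].
  set m := n %/ p.
  have nE : n = m * p by rewrite divnK.
  have hc : (p %/ 6 + 1) * m <= #|S|.
    rewrite /S (card_count n (fun x => (p < 3 * (x %% p)) && (2 * (x %% p) < p))) nE count_periodic; last first.
      by move=> x; rewrite modnDl.
    rewrite mulnC leq_mul2l; apply/orP; right.
    apply: (@count_inj _ _ _ (fun i => 2 * (p %/ 6) + 2 + i)) => [i hi|i j _ _]; last by lia.
    have hi' : 2 * (p %/ 6) + 2 + i < p by lia.
    rewrite /= modn_small //; split => //; apply/andP; split; lia.
  have e6 : (p + 1) * n = (p %/ 6 + 1) * m * (6 * p).
    have -> : p + 1 = 6 * (p %/ 6 + 1) by lia.
    rewrite {1}nE; ring.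
  rewrite e6 natrM mulfK; last by rewrite pnatr_eq0; lia.
  by rewrite ler_nat; apply: (leq_trans hc); exact: s_ge.
Qed.
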